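(* For any $a,b,\alpha,\beta$ and any natural number $n\ge1$, \[ \Psi\left(\begin{array}{cc|c} a & b & n \\ \alpha & \beta & \lfloor n/2\rfloor \end{array}\right)=(-1)^{\lfloor n/2\rfloor}\Psi(\alpha,\beta,n),\qquad \Phi\left(\begin{array}{cc|c} a & b & n \\ \alpha & \beta & \lfloor (n-1)/2\rfloor \end{array}\right)=(-1)^{\lfloor (n-1)/2\rfloor}\Phi(\alpha,\beta,n). \]
   Context: $\delta(m)=1$ for $m$ odd, $0$ for $m$ even; $\lfloor\cdot\rfloor$ is the floor. $\Psi(a,b,n)$, $\Phi(a,b,n)$ are defined by $\Psi(a,b,0)=2$, $\Psi(a,b,1)=1$, $\Psi(a,b,n+1)=(2a-b)^{\delta(n)}\Psi(a,b,n)-a\Psi(a,b,n-1)$ and $\Phi(a,b,0)=0$, $\Phi(a,b,1)=1$, $\Phi(a,b,n+1)=(2a-b)^{\delta(n+1)}\Phi(a,b,n)-a\Phi(a,b,n-1)$. For indeterminates $a,b,\alpha,\beta$ and $n\ge1$, $\Psi\left(\begin{array}{cc|c} a & b & n \\ \alpha & \beta & r \end{array}\right)$ ($0\le r\le\lfloor n/2\rfloor$) and $\Phi\left(\begin{array}{cc|c} a & b & n \\ \alpha & \beta & r \end{array}\right)$ ($0\le r\le\lfloor (n-1)/2\rfloor$) are the unique polynomials in $\mathbb{Z}[a,b,\alpha,\beta]$ such that, identically in $x,y$, $(\beta a-\alpha b)^{\lfloor n/2\rfloor}\frac{x^n+y^n}{(x+y)^{\delta(n)}}=\sum_{r}\Psi\left(\begin{array}{cc|c}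 a & b & n \\ \alpha & \beta & r \end{array}\right)(\alpha x^2+\beta xy+\alpha y^2)^{\lfloor n/2\rfloor-r}(ax^2+bxy+ay^2)^r$ and $(\beta a-\alpha b)^{\lfloor (n-1)/2\rfloor}\frac{x^n-y^n}{(x-y)(x+y)^{\delta(n-1)}}=\sum_{r}\Phi\left(\begin{array}{cc|c} a & b & n \\ \alpha & \beta & r \end{array}\right)(\alpha x^2+\beta xy+\alpha y^2)^{\lfloor (n-1)/2\rfloor-r}(ax^2+bxy+ay^2)^r$. For numerical values of $a,b,\alpha,\beta$ they are evaluated. *)

(* Defs.v *)
From HB Require Import structures.
From mathcomp Require Import all_boot all_order all_algebra.
From mathcomp Require Import mpoly.
Set Implicit Arguments. Unset Strict Implicit. Unset Printing Implicit Defensive.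
Import GRing.Theory.
Local Open Scope ring_scope.

(* delta(m) = odd m (coerced to nat). *)

(* psi2 a b n = (Psi(a,b,n), Psi(a,b,n+1)) *)
Fixpoint psi2 (R : comRingType) (a b : R) (n : nat) : R * R :=
  match n with
  | 0 => (2%:R, 1)
  | m.+1 => let (p, q) := psi2 a b m in
            (q, (2%:R * a - b) ^+ (odd m.+1) * q - a * p)
  end.
Definition Psi (R : comRingType) (a b : R) (n : nat) : R := (psi2 a b n).1.

(* phi2 a b n = (Phi(a,b,n), Phi(a,b,n+1)) *)
Fixpoint phi2 (R : comRingType) (a b : R) (n : nat) : R * R :=
  match n with
  | 0 => (0, 1)
  | m.+1 => let (p, q) := phi2 a b m in
            (q, (2%:R * a - b) ^+ (odd m.+2) * q - a * p)
  end.
Definition Phi (R : comRingType) (a b : R) (n : nat) : R := (phi2 a b n).1.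

Notation P := {mpoly int[4]}.
Definition va : P := 'X_(0 : 'I_4).
Definition vb : P := 'X_(1 : 'I_4).
Definition valpha : P := 'X_(2 : 'I_4).
Definition vbeta : P := 'X_(3 : 'I_4).

(* Bivariate polynomials in x, y over R, represented as R[y][x]. *)
Definition Xv (R : comRingType) : {poly {poly R}} := 'X.
Definition Yv (R : comRingType) : {poly {poly R}} := ('X)%:P.
Definition cst (R : comRingType) (c : R) : {poly {poly R}} := c%:P%:P.

Definition qform (R : comRingType) (u v : R) : {poly {poly R}} :=
  cst u * Xv R ^+ 2 + cst v * Xv R * Yv R + cst u * Yv R ^+ 2.

(* c (r = 0..n/2) are the coefficients Psi(a b n | alpha beta r):
   (beta a - alpha b)^{n/2} (x^n + y^n)/(x+y)^{delta n}
     = sum_r c r (alpha x^2+beta xy+alpha y^2)^{n/2-r} (a x^2+b xy+a y^2)^r,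
   with the division cleared (multiplication by (x+y)^{delta n}). *)
Definition is_Psi_coefs (n : nat) (c : nat -> P) : Prop :=
  cst ((vbeta * va - valpha * vb) ^+ n./2) * (Xv P ^+ n + Yv P ^+ n)
  = (Xv P + Yv P) ^+ (odd n) *
    \sum_(r < (n./2).+1)
       cst (c r) * qform valpha vbeta ^+ (n./2 - r) * qform va vb ^+ r.

(* Same for Phi(a b n | alpha beta r), r = 0..(n-1)/2:
   (beta a - alpha b)^{(n-1)/2} (x^n - y^n)/((x-y)(x+y)^{delta(n-1)}) = sum ... *)
Definition is_Phi_coefs (n : nat) (c : nat -> P) : Prop :=
  cst ((vbeta * va - valpha * vb) ^+ (n.-1)./2) * (Xv P ^+ n - Yv P ^+ n)
  = (Xv P - Yv P) * (Xv P + Yv P) ^+ (odd n.-1) *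
    \sum_(r < ((n.-1)./2).+1)
       cst (c r) * qform valpha vbeta ^+ ((n.-1)./2 - r) * qform va vb ^+ r.

(* Main.v *)
Require Import Defs.
From HB Require Import structures.
From mathcomp Require Import all_boot all_order all_algebra.
From mathcomp Require Import mpoly ring.
Import GRing.Theory.
Local Open Scope ring_scope.

Local Notation T := ('X : {poly P}).
Local Notation A := (valpha%:P : {poly P}).
Local Notation B := (vbeta%:P : {poly P}).
Definition Mp : {poly P} := T ^+ 2 + B * T + A ^+ 2.
Definition cong (p q : {poly P}) := exists z, p = q + z * Mp.

Lemma cong_refl p : cong p p. Proof. by exists 0; rewrite mul0r addr0. Qed.
Lemma congM p1 q1 p2 q2 : cong p1 q1 -> cong p2 q2 -> cong (p1 * p2) (q1 * q2).
Proof. by case=> z1 -> [z2 ->]; exists (q1 * z2 + z1 * q2 + z1 * z2 * Mp); ring. Qed.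
Lemma congX p q k : cong p q -> cong (p ^+ k) (q ^+ k).
Proof.
move=> H; elim: k => [|k IH]; first exact: cong_refl.
by rewrite !exprS; apply: congM.
Qed.

Lemma psi2S (R : comRingType) (a b : R) n :
  psi2 a b n.+1 = ((psi2 a b n).2, (2%:R * a - b) ^+ (odd n.+1) * (psi2 a b n).2 - a * (psi2 a b n).1).
Proof. by rewrite /=; case: (psi2 a b n). Qed.
Lemma phi2S (R : comRingType) (a b : R) n :
  phi2 a b n.+1 = ((phi2 a b n).2, (2%:R * a - b) ^+ (odd n.+2) * (phi2 a b n).2 - a * (phi2 a b n).1).
Proof. by rewrite /=; case: (phi2 a b n). Qed.
Lemma PsiSS (R : comRingType) (a b : R) n :
  Psi a b n.+2 = (2%:R * a - b) ^+ (odd n.+1) * Psi a b n.+1 - a * Psi a b n.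
Proof. by rewrite /Psi !psi2S. Qed.
Lemma PhiSS (R : comRingType) (a b : R) n :
  Phi a b n.+2 = (2%:R * a - b) ^+ (odd n.+2) * Phi a b n.+1 - a * Phi a b n.
Proof. by rewrite /Phi !phi2S. Qed.

Lemma psi_cong n : cong (T ^+ n + A ^+ n)
  ((Psi valpha vbeta n)%:P * (T + A) ^+ (odd n) * T ^+ (n./2)).
Proof.
move: n; suff: forall n, cong (T ^+ n + A ^+ n)
  ((Psi valpha vbeta n)%:P * (T + A) ^+ (odd n) * T ^+ (n./2)) /\
  cong (T ^+ n.+1 + A ^+ n.+1)
  ((Psi valpha vbeta n.+1)%:P * (T + A) ^+ (odd n.+1) * T ^+ (n.+1./2)) by move=> H n; case: (H n).
elim=> [|n [IH0 IH1]].
  split; exists 0; rewrite /Psi /= ?rmorph_nat; ring.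
split; first exact: IH1.
rewrite PsiSS.
have -> : odd n.+2 = odd n by rewrite /= negbK.
have -> : (n.+2)./2 = (n./2).+1 by [].
have E : odd n.+1 = ~~ odd n by [].
rewrite E in IH1 *.
rewrite (_ : (n.+1)./2 = (odd n + n./2)%N) in IH1; last by rewrite /= uphalf_half.
move: IH0 IH1; case: (odd n) => /=; rewrite ?add1n ?add0n ?expr1 ?expr0 => -[z0 E0] [z1 E1].
  exists ((T + A) * z1 - A * T * z0); move: E0 E1; rewrite !exprS => E0 E1.
  rewrite (_ : T * (T * T ^+ n) + A * (A * A ^+ n) =
     (T + A) * (T * T ^+ n + A * A ^+ n) - A * T * (T ^+ n + A ^+ n)); last by ring.
  rewrite E0 E1 /Mp !(polyCB, polyCM, polyC_natr, polyC1, polyCN); ring.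
exists ((T + A) * z1 - A * T * z0 + (Psi valpha vbeta n.+1)%:P * T ^+ n./2).
move: E0 E1; rewrite !exprS => E0 E1.
rewrite (_ : T * (T * T ^+ n) + A * (A * A ^+ n) =
   (T + A) * (T * T ^+ n + A * A ^+ n) - A * T * (T ^+ n + A ^+ n)); last by ring.
rewrite E0 E1 /Mp !(polyCB, polyCM, polyC_natr, polyC1, polyCN); ring.
Qed.

Lemma phi_cong j : cong (T ^+ j.+1 - A ^+ j.+1)
  ((T - A) * (Phi valpha vbeta j.+1)%:P * (T + A) ^+ (odd j) * T ^+ (j./2)).
Proof.
move: j; suff: forall j, cong (T ^+ j.+1 - A ^+ j.+1)
  ((T - A) * (Phi valpha vbeta j.+1)%:P * (T + A) ^+ (odd j) * T ^+ (j./2)) /\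
  cong (T ^+ j.+2 - A ^+ j.+2)
  ((T - A) * (Phi valpha vbeta j.+2)%:P * (T + A) ^+ (odd j.+1) * T ^+ (j.+1./2)).
  by move=> H n; case: (H n).
elim=> [|n [IH0 IH1]].
  split; exists 0; rewrite /Phi /= ?expr0 ?expr1 ?(polyCB, polyCM, polyC_natr, polyC1, polyCN, polyC0); ring.
split; first exact: IH1.
rewrite PhiSS.
have -> : odd n.+3 = ~~ odd n by rewrite /= negbK.
have -> : odd n.+2 = odd n by rewrite /= negbK.
have -> : (n.+2)./2 = (n./2).+1 by [].
have E : odd n.+1 = ~~ odd n by [].
rewrite E in IH1.
rewrite (_ : (n.+1)./2 = (odd n + n./2)%N) in IH1; last by rewrite /= uphalf_half.
move: IH0 IH1; case: (odd n) => /=; rewrite ?add1n ?add0n ?expr1 ?expr0 => -[z0 E0] [z1 E1].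
  exists ((T + A) * z1 - A * T * z0); move: E0 E1; rewrite !exprS => E0 E1.
  rewrite (_ : T * (T * (T * T ^+ n)) - A * (A * (A * A ^+ n)) =
     (T + A) * (T * (T * T ^+ n) - A * (A * A ^+ n)) - A * T * (T * T ^+ n - A * A ^+ n)); last by ring.
  rewrite E0 E1 /Mp !(polyCB, polyCM, polyC_natr, polyC1, polyCN); ring.
exists ((T + A) * z1 - A * T * z0 + (T - A) * (Phi valpha vbeta n.+2)%:P * T ^+ n./2).
move: E0 E1; rewrite !exprS => E0 E1.
rewrite (_ : T * (T * (T * T ^+ n)) - A * (A * (A * A ^+ n)) =
   (T + A) * (T * (T * T ^+ n) - A * (A * A ^+ n)) - A * T * (T * T ^+ n - A * A ^+ n)); last by ring.
rewrite E0 E1 /Mp !(polyCB, polyCM, polyC_natr, polyC1, polyCN); ring.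
Qed.

Lemma det2 (R : comNzRingType) (M : 'M[R]_2) : \det M = M 0 0 * M 1 1 - M 0 1 * M 1 0.
Proof.
rewrite (expand_det_row _ ord0) !big_ord_recl big_ord0 /cofactor !det_mx11 !mxE /=.
rewrite addr0 expr0 expr1 mul1r mulN1r mulrN.
by congr (M _ _ * M _ _ - M _ _ * M _ _); apply: val_inj.
Qed.

Definition W : 'M[P]_2 := \matrix_(i, j)
  if val i == 0%N then (if val j == 0%N then 0 else - valpha ^+ 2)
  else (if val j == 0%N then 1 else - vbeta).

Lemma W_root : W ^+ 2 + vbeta%:M * W + (valpha ^+ 2)%:M = 0.
Proof.
apply/matrixP => i j; rewrite expr2 !mxE !big_ord_recl !big_ord0 /W !mxE /=.
by case: i => [[|[|i]] Hi] //; case: j => [[|[|j]] Hj] //=; rewrite ?mxE /= ?mulr1n ?mulr0n; ring.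
Qed.

Lemma detWs (s : P) : \det (W + s%:M) = s * (s - vbeta) + valpha ^+ 2.
Proof. by rewrite det2 /W !mxE /= ?mulr1n ?mulr0n; ring. Qed.

Lemma detWm (s : P) : \det (W - s%:M) = s * (s + vbeta) + valpha ^+ 2.
Proof. by rewrite det2 /W !mxE /= ?mulr1n ?mulr0n; ring. Qed.
Lemma detW : \det W = valpha ^+ 2.
Proof. by rewrite det2 /W !mxE /=; ring. Qed.

Lemma detXn (M : 'M[P]_2) k : \det (M ^+ k) = \det M ^+ k.
Proof. by elim: k => [|k IH]; rewrite ?expr0 ?det1 // !exprS detM IH. Qed.

Definition v0 : 'I_4 -> int := fun i => if val i == 0%N then 1 else if val i == 1%N then 0
  else if val i == 2%N then 1 else 3.

Lemma nz_of_eval (x : P) : meval v0 x != 0 -> x != 0.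
Proof. by apply: contraNneq => ->; rewrite meval0. Qed.

Lemma alpha_nz : valpha != 0.
Proof. by apply: nz_of_eval; rewrite /valpha mevalXU. Qed.
Lemma twoamb_nz : 2%:R * valpha - vbeta != 0.
Proof. by apply: nz_of_eval; rewrite mevalB mevalM /valpha /vbeta !mevalXU rmorph_nat. Qed.
Lemma twoapb_nz : 2%:R * valpha + vbeta != 0.
Proof. by apply: nz_of_eval; rewrite mevalD mevalM /valpha /vbeta !mevalXU rmorph_nat. Qed.
Lemma D_nz : vbeta * va - valpha * vb != 0.
Proof. by apply: nz_of_eval; rewrite mevalB !mevalM /valpha /vbeta /va /vb !mevalXU. Qed.

Lemma Mp_W : horner_mx W Mp = 0.
Proof.
by rewrite /Mp !rmorphD !rmorphM /= !horner_mx_C horner_mx_X -W_root !expr2 scalar_mxM.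
Qed.

Lemma key_cancel (K : P) f e k z :
  K%:P * (T - A) ^+ f * (T + A) ^+ e * T ^+ k = z * Mp -> K = 0.
Proof.
move/(congr1 (horner_mx W)).
rewrite !rmorphM !rmorphXn rmorphB rmorphD /= !horner_mx_C horner_mx_X Mp_W mulr0.
move/(congr1 determinant); rewrite !detM !detXn det0 det_scalar.
rewrite detWs detWm detW.
have h1 : valpha * (valpha + vbeta) + valpha ^+ 2 != 0.
  rewrite (_ : _ + _ = valpha * (2%:R * valpha + vbeta)); last by ring.
  by rewrite mulf_neq0 // ?alpha_nz ?twoapb_nz.
have h2 : valpha * (valpha - vbeta) + valpha ^+ 2 != 0.
  rewrite (_ : _ + _ = valpha * (2%:R * valpha - vbeta)); last by ring.
  by rewrite mulf_neq0 // ?alpha_nz ?twoamb_nz.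
move/eqP; rewrite !mulf_eq0 !expf_eq0 /= (negbTE h1) (negbTE h2) (negbTE alpha_nz).
by rewrite !andbF !orbF orbb => /eqP.
Qed.

Definition phi : {poly {poly P}} -> {poly P} := map_poly (horner_eval valpha).
Lemma phiM p q : phi (p * q) = phi p * phi q. Proof. exact: rmorphM. Qed.
Lemma phiD p q : phi (p + q) = phi p + phi q. Proof. exact: rmorphD. Qed.
Lemma phiB p q : phi (p - q) = phi p - phi q. Proof. exact: rmorphB. Qed.
Lemma phiXn p k : phi (p ^+ k) = phi p ^+ k. Proof. exact: rmorphXn. Qed.
Lemma phi_sum m (F : 'I_m -> {poly {poly P}}) : phi (\sum_(i < m) F i) = \sum_(i < m) phi (F i).
Proof. exact: rmorph_sum. Qed.
Lemma phi_cst (x : P) : phi (cst x) = x%:P.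
Proof. by rewrite /phi /cst map_polyC /= horner_evalE hornerC. Qed.
Lemma phi_X : phi (Xv P) = T.
Proof. by rewrite /phi /Xv map_polyX. Qed.
Lemma phi_Y : phi (Yv P) = A.
Proof. by rewrite /phi /Yv map_polyC /= horner_evalE hornerX. Qed.
Lemma phi_qform (u v : P) : phi (qform u v) = u%:P * T ^+ 2 + v%:P * T * A + u%:P * A ^+ 2.
Proof.
rewrite /qform; have hX := phi_X; have hY := phi_Y; have hu := phi_cst u; have hv := phi_cst v.
move: (Xv P) (Yv P) (cst u) (cst v) hX hY hu hv => X Y cu cv hX hY hu hv.
rewrite !phiD !phiM hX hY hu hv; ring.
Qed.

Local Notation D := (vbeta * va - valpha * vb).
Local Notation q2 := (- D%:P * T + va%:P * Mp).

Lemma q1E : phi (qform valpha vbeta) = A * Mp.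
Proof. by rewrite phi_qform /Mp; ring. Qed.
Lemma q2E : phi (qform va vb) = q2.
Proof. by rewrite phi_qform /Mp !(polyCB, polyCM); ring. Qed.

Lemma phi_term x k l : phi (cst x * qform valpha vbeta ^+ k * qform va vb ^+ l) =
  x%:P * (A * Mp) ^+ k * q2 ^+ l.
Proof.
have h1 := q1E; have h2 := q2E; have h3 := phi_cst x.
move: (qform valpha vbeta) (qform va vb) (cst x) h1 h2 h3 => Q1 Q2 C h1 h2 h3.
by rewrite !phiM !phiXn h1 h2 h3.
Qed.

Lemma sum_cong m (c : nat -> P) :
  cong (\sum_(r < m.+1) (c r)%:P * (A * Mp) ^+ (m - r) * q2 ^+ r)
       ((c m)%:P * (- D%:P * T) ^+ m).
Proof.
rewrite big_ord_recr /= subnn expr0 mulr1.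
have hq : cong q2 (- D%:P * T) by exists va%:P.
have [z Hz] := congX _ _ m hq.
exists ((c m)%:P * z + \sum_(i < m) (c i)%:P * (A * Mp) ^+ (m - i).-1 * q2 ^+ i * A).
rewrite Hz mulrDl mulr_suml.
have -> : \sum_(i < m) (c (widen_ord (leqnSn m) i))%:P * (A * Mp) ^+ (m - widen_ord (leqnSn m) i) *
    q2 ^+ widen_ord (leqnSn m) i =
  \sum_(i < m) (c i)%:P * (A * Mp) ^+ (m - i).-1 * q2 ^+ i * A * Mp.
  apply: eq_bigr => i _ /=.
  have -> : (A * Mp) ^+ (m - i) = (A * Mp) ^+ (m - i).-1 * (A * Mp).
    by rewrite -exprSr prednK // subn_gt0.
  ring.
ring.
Qed.

Lemma lin (x y z1 z2 M : {poly P}) : x + z1 * M = y + z2 * M -> x - y = (z2 - z1) * M.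
Proof. by move=> h; rewrite (canRL (addrK (z1 * M)) h); ring. Qed.

Lemma finish m (Q cm : P) :
  D ^+ m * Q - cm * (- D) ^+ m = 0 -> cm = (-1) ^+ m * Q.
Proof.
move=> h.
have : D ^+ m * (Q - (-1) ^+ m * cm) = 0.
  rewrite -h (exprNn D); set s := (-1) ^+ m; set d := D ^+ m; ring.
move/eqP; rewrite mulf_eq0 expf_eq0 (negbTE D_nz) andbF /= subr_eq0 => /eqP ->.
by rewrite mulrA -exprMn mulrNN mulr1 expr1n mul1r.
Qed.

Lemma main_psi n c : is_Psi_coefs n c -> c n./2 = (-1) ^+ n./2 * Psi valpha vbeta n.
Proof.
rewrite /is_Psi_coefs; set m := n./2 => H.
have hX := phi_X; have hY := phi_Y; have hC := phi_cst (D ^+ m).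
move: (Xv P) (Yv P) (cst (D ^+ m)) hX hY hC H => X Y C hX hY hC H.
have L : phi (C * (X ^+ n + Y ^+ n)) = (D ^+ m)%:P * (T ^+ n + A ^+ n).
  by rewrite phiM phiD !phiXn hX hY hC.
have R : phi ((X + Y) ^+ odd n * \sum_(r < m.+1) cst (c r) * qform valpha vbeta ^+ (m - r) * qform va vb ^+ r)
   = (T + A) ^+ odd n * \sum_(r < m.+1) (c r)%:P * (A * Mp) ^+ (m - r) * q2 ^+ r.
  rewrite phiM phiXn phiD hX hY phi_sum; congr (_ * _).
  by apply: eq_bigr => i _; rewrite phi_term.
have E := congr1 phi H; rewrite L R {L R H} in E.
have [z1 E1] := congM _ _ _ _ (cong_refl ((D ^+ m)%:P)) (psi_cong n).
have [z2 E2] := congM _ _ _ _ (cong_refl ((T + A) ^+ odd n)) (sum_cong m c).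
rewrite E E2 in E1.
have K0 := lin _ _ _ _ _ (esym E1).
apply: finish; apply: (key_cancel _ 0 (odd n) m (z2 - z1)).
rewrite -K0 expr0 mulr1 !(polyCB, polyCM, polyC_exp, polyCN) exprMn; ring.
Qed.

Lemma main_phi n c : (1 <= n)%N -> is_Phi_coefs n c ->
  c (n.-1)./2 = (-1) ^+ (n.-1)./2 * Phi valpha vbeta n.
Proof.
case: n => [//|j] _; rewrite /is_Phi_coefs.
have -> : j.+1.-1 = j by [].
set m := j./2 => H.
have hX := phi_X; have hY := phi_Y; have hC := phi_cst (D ^+ m).
move: (Xv P) (Yv P) (cst (D ^+ m)) hX hY hC H => X Y C hX hY hC H.
have L : phi (C * (X ^+ j.+1 - Y ^+ j.+1)) = (D ^+ m)%:P * (T ^+ j.+1 - A ^+ j.+1).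
  by rewrite phiM phiB !phiXn hX hY hC.
have R : phi ((X - Y) * (X + Y) ^+ odd j * \sum_(r < m.+1) cst (c r) * qform valpha vbeta ^+ (m - r) * qform va vb ^+ r)
   = (T - A) * (T + A) ^+ odd j * \sum_(r < m.+1) (c r)%:P * (A * Mp) ^+ (m - r) * q2 ^+ r.
  rewrite !phiM phiB phiXn phiD hX hY phi_sum; congr (_ * _).
  by apply: eq_bigr => i _; rewrite phi_term.
have E := congr1 phi H; rewrite L R {L R H} in E.
have [z1 E1] := congM _ _ _ _ (cong_refl ((D ^+ m)%:P)) (phi_cong j).
have [z2 E2] := congM _ _ _ _ (cong_refl ((T - A) * (T + A) ^+ odd j)) (sum_cong m c).
rewrite E E2 in E1.
have K0 := lin _ _ _ _ _ (esym E1).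
apply: finish; apply: (key_cancel _ 1 (odd j) m (z2 - z1)).
rewrite -K0 expr1 !(polyCB, polyCM, polyC_exp, polyCN) exprMn; ring.
Qed.

Theorem theorem6p1 (n : nat) : (1 <= n)%N ->
  (forall c : nat -> P, is_Psi_coefs n c ->
     c n./2 = (-1) ^+ n./2 * Psi valpha vbeta n) /\
  (forall c : nat -> P, is_Phi_coefs n c ->
     c (n.-1)./2 = (-1) ^+ (n.-1)./2 * Phi valpha vbeta n).
Proof.
move=> Hn; split => c Hc; first exact: main_psi.
exact: main_phi.
Qed.
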